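(* Let $D_1,\dots,D_k$ be $n\times n$ doubly stochastic matrices and $\delta_1,\dots,\delta_k$ positive real numbers, and let $S_k(D)=\delta_1D_1+\cdots+\delta_kD_k$. Then for every $m\in\mathbb{N}$ and every block structure $\mathbb{B}\subseteq M_n(\mathbb{C})$, $\mu_{\mathbb{B}}(S_k(D)^m)=(\delta_1+\cdots+\delta_k)^m$.
   Context: A doubly stochastic matrix is a real matrix with nonnegative entries whose row sums and column sums all equal $1$. $\|M\|_2$ denotes the spectral norm. A block structure is a set of the form $\mathbb{B}=\{\operatorname{diag}(\delta_1I_{k_1},\dots,\delta_rI_{k_r},\Delta_1,\dots,\Delta_s)\mid \delta_i\in\mathbb{C},\ \Delta_j\in M_{n_j}(\mathbb{C})\}\subseteq M_n(\mathbb{C})$ for some $r,s\in\mathbb{N}_0$ and positive integers $k_i,n_j$ with $\sum k_i+\sum n_j=n$. The structured singular value is $\mu_{\mathbb{B}}(M)=0$ if $\det(I+M\Delta)\neq0$ for all $\Delta\in\mathbb{B}$, and otherwise $\mu_{\mathbb{B}}(M)=\big(\min\{\|\Delta\|_2\mid \Delta\in\mathbb{B},\ \det(I+M\Delta)=0\}\big)^{-1}$. *)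

(* Defs.v *)
From HB Require Import structures.
From mathcomp Require Import all_boot all_order all_algebra.
From mathcomp Require Import boolp classical_sets reals.
From mathcomp Require Import complex.
Set Implicit Arguments. Unset Strict Implicit. Unset Printing Implicit Defensive.
Import Order.TTheory GRing.Theory Num.Theory.
Local Open Scope ring_scope.
Local Open Scope classical_set_scope.

Definition doubly_stochastic (R : realType) (n : nat) (D : 'M[R]_n) : Prop :=
  (forall i j, 0 <= D i j) /\
  (forall i, \sum_j D i j = 1) /\
  (forall j, \sum_i D i j = 1).

Definition cabs2 (R : realType) (z : R[i]) : R :=
  (complex.Re z) ^+ 2 + (complex.Im z) ^+ 2.

Definition vnorm2 (R : realType) (n : nat) (x : 'cV[R[i]]_n) : R :=
  Num.sqrt (\sum_i cabs2 (x i 0)).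

Definition specnorm (R : realType) (n : nat) (A : 'M[R[i]]_n) : R :=
  sup [set vnorm2 (A *m x) | x in [set x : 'cV[R[i]]_n | vnorm2 x <= 1]].

(* A block structure is given by the list ks = [k_1;...;k_r] of sizes of the
   scalar blocks delta_i I_{k_i} followed by the list ns = [n_1;...;n_s] of
   sizes of the full blocks Delta_j; blocks are placed on the diagonal in the
   order diag(delta_1 I_{k_1},...,delta_r I_{k_r},Delta_1,...,Delta_s). *)
Definition block_structure (n : nat) (ks ns : seq nat) : Prop :=
  all (fun k => 0 < k)%N ks /\ all (fun k => 0 < k)%N ns /\
  (sumn ks + sumn ns)%N = n.

(* end offset of block b (blocks numbered from 0) *)
Definition blk_end (ks ns : seq nat) (b : nat) : nat :=
  sumn (take b.+1 (ks ++ ns)).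

Definition blk (ks ns : seq nat) (i : nat) : nat :=
  find (fun b => i < blk_end ks ns b)%N (iota 0 (size (ks ++ ns))).

(* Membership of Delta in the block structure B(ks, ns), written out entrywise:
   entries outside diagonal blocks vanish; scalar blocks (numbers < size ks)
   are multiples of the identity; full blocks are arbitrary. *)
Definition in_block (R : realType) (n : nat) (ks ns : seq nat)
    (Delta : 'M[R[i]]_n) : Prop :=
  (forall i j : 'I_n, blk ks ns i <> blk ks ns j -> Delta i j = 0) /\
  (forall i j : 'I_n, blk ks ns i = blk ks ns j -> (blk ks ns i < size ks)%N ->
      (i <> j -> Delta i j = 0) /\ Delta i i = Delta j j).

Definition ssv (R : realType) (n : nat) (ks ns : seq nat) (M : 'M[R[i]]_n) : R :=
  let S := [set specnorm Delta | Delta in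
             [set Delta | in_block ks ns Delta /\ \det (1%:M + M *m Delta) = 0]] in
  if `[< S !=set0 >] then (inf S)^-1 else 0.

Definition Sk (R : realType) (n k : nat) (delta : 'I_k -> R) (D : 'I_k -> 'M[R]_n)
  : 'M[R]_n := \sum_(l < k) delta l *: D l.

Definition cmx (R : realType) (n : nat) (A : 'M[R]_n) : 'M[R[i]]_n :=
  map_mx (fun x => x%:C%C) A.

(* Main.v *)
Require Import Defs.
From HB Require Import structures.
From mathcomp Require Import all_boot all_order all_algebra.
From mathcomp Require Import boolp classical_sets reals.
From mathcomp Require Import complex.
From mathcomp Require Import ring lra.
Import Order.TTheory GRing.Theory Num.Theory.
Set Implicit Arguments. Unset Strict Implicit. Unset Printing Implicit Defensive.
Local Open Scope ring_scope.
Section Aux.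
Variable R : realType.
Implicit Types (z x y : R[i]) (a : R).

Definition nc (z : R[i]) : R := Num.sqrt (cabs2 z).

Lemma cabs2_ge0 (z : R[i]) : 0 <= cabs2 z.
Proof. by rewrite /cabs2 addr_ge0 ?sqr_ge0. Qed.

Lemma nc_ge0 z : 0 <= nc z.
Proof. exact: sqrtr_ge0. Qed.

Lemma nc_sqr z : nc z ^+ 2 = cabs2 z.
Proof. by rewrite sqr_sqrtr ?cabs2_ge0. Qed.

Lemma nc_normc z : nc z = Normc.normc z.
Proof. by case: z. Qed.

Lemma nc_add x y : nc (x + y) <= nc x + nc y.
Proof. rewrite !nc_normc; exact: (@le_normcD R x y). Qed.

Lemma nc_mul x y : nc (x * y) = nc x * nc y.
Proof. by rewrite !nc_normc Normc.normcM. Qed.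

Lemma nc_real a : nc (a%:C%C) = `|a|.
Proof. by rewrite /nc /cabs2 /= expr0n /= addr0 sqrtr_sqr. Qed.

Lemma nc_eq0 z : nc z = 0 -> z = 0.
Proof. by rewrite nc_normc; apply: Normc.eq0_normc. Qed.

Lemma cabs2N z : cabs2 (- z) = cabs2 z.
Proof. by case: z => a b; rewrite /cabs2 /= !sqrrN. Qed.

Lemma cabs2_realM a z : cabs2 (a%:C%C * z) = a ^+ 2 * cabs2 z.
Proof. case: z => x y; rewrite /cabs2 /=; ring. Qed.

Lemma nc_sum (I : finType) (f : I -> R[i]) : nc (\sum_i f i) <= \sum_i nc (f i).
Proof.
elim/big_rec2: _ => [|i a b _ IH].
  by rewrite /nc /cabs2 /= expr0n /= addr0 sqrtr0.
exact: le_trans (nc_add _ _) (lerD (lexx _) IH).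
Qed.

Lemma cs_ineq (I : finType) (a t : I -> R) : (forall i, 0 <= a i) ->
  (\sum_i a i * t i) ^+ 2 <= (\sum_i a i) * (\sum_i a i * t i ^+ 2).
Proof.
move=> a0.
set A0 := \sum_i a i; set A1 := \sum_i a i * t i; set A2 := \sum_i a i * t i ^+ 2.
have key mu : 0 <= A2 - mu * A1 *+ 2 + mu ^+ 2 * A0.
  have -> : A2 - mu * A1 *+ 2 + mu ^+ 2 * A0 = \sum_i a i * (t i - mu) ^+ 2.
    rewrite (eq_bigr (fun i => a i * t i ^+ 2 - mu * (a i * t i) *+ 2 + mu ^+ 2 * a i)); last by move=> i _; ring.
    by rewrite !big_split /= sumrN sumrMnl -!mulr_sumr.
  by apply: sumr_ge0 => i _; rewrite mulr_ge0 ?sqr_ge0.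
have A0ge : 0 <= A0 by apply: sumr_ge0.
have [A00|A0pos] := eqVneq A0 0.
  have az i : a i = 0 by apply: (psumr_eq0P (fun i _ => a0 i) A00).
  by rewrite /A1 big1 ?expr0n ?A00 ?mul0r // => i _; rewrite az mul0r.
have A0p : 0 < A0 by rewrite lt_def A0pos.
have := key (A1 / A0).
have -> : A2 - A1 / A0 * A1 *+ 2 + (A1 / A0) ^+ 2 * A0 = (A0 * A2 - A1 ^+ 2) / A0.
  by field.
by rewrite pmulr_lge0 ?invr_gt0 // subr_ge0.
Qed.


Lemma sq_le (u v : R) : 0 <= u -> u <= v -> u ^+ 2 <= v ^+ 2.
Proof. by move=> u0 uv; rewrite !expr2 ler_pM. Qed.

Lemma cabs2_le_nc z (u : R) : nc z <= u -> cabs2 z <= u ^+ 2.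
Proof. by move=> h; rewrite -nc_sqr sq_le ?nc_ge0. Qed.

Variable n : nat.
Implicit Types (v w : 'cV[R[i]]_n).

Lemma sumc_ge0 v : 0 <= \sum_i cabs2 (v i 0).
Proof. by apply: sumr_ge0 => i _; apply: cabs2_ge0. Qed.

Lemma vnorm2_ge0 v : 0 <= vnorm2 v.
Proof. exact: sqrtr_ge0. Qed.

Lemma vnorm2_0 : vnorm2 (0 : 'cV[R[i]]_n) = 0.
Proof.
rewrite /vnorm2 big1 ?sqrtr0 // => i _; rewrite mxE /cabs2 /= expr0n /=.
by rewrite addr0.
Qed.

Lemma vnorm2_eq0 v : vnorm2 v = 0 -> v = 0.
Proof.
move=> /eqP; rewrite sqrtr_eq0 => h.
have h0 : \sum_i cabs2 (v i 0) = 0 by apply/le_anti; rewrite h sumc_ge0.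
apply/matrixP => i j; rewrite (ord1 j) mxE; apply: nc_eq0.
rewrite /nc (psumr_eq0P (fun i _ => cabs2_ge0 (v i 0)) h0) ?sqrtr0 //.
Qed.

Lemma vnorm2N v : vnorm2 (- v) = vnorm2 v.
Proof. by rewrite /vnorm2; congr Num.sqrt; apply: eq_bigr => i _; rewrite mxE cabs2N. Qed.

Lemma vnorm2Z a v : vnorm2 (a%:C%C *: v) = `|a| * vnorm2 v.
Proof.
rewrite /vnorm2 (eq_bigr (fun i => a ^+ 2 * cabs2 (v i 0))); last first.
  by move=> i _; rewrite mxE cabs2_realM.
by rewrite -mulr_sumr sqrtrM ?sqr_ge0 // sqrtr_sqr.
Qed.

Lemma entry_le1 v (j : 'I_n) : vnorm2 v <= 1 -> nc (v j 0) <= 1.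
Proof.
move=> h; have : \sum_i cabs2 (v i 0) <= 1.
  by rewrite -(ler_sqrt _ ler01) sqrtr1.
rewrite (bigD1 j) //= => h2.
rewrite -sqrtr1 ler_sqrt ?ler01 //; apply: le_trans h2.
by rewrite lerDl; apply: sumr_ge0 => i _; apply: cabs2_ge0.
Qed.

Lemma mulmx_entry (A : 'M[R[i]]_n) v i :
  nc ((A *m v) i 0) <= \sum_j nc (A i j) * nc (v j 0).
Proof.
rewrite mxE; apply: le_trans (nc_sum _) _.
by apply: ler_sum => j _; rewrite nc_mul.
Qed.

Lemma specnorm_has_sup (A : 'M[R[i]]_n) :
  has_sup [set vnorm2 (A *m x) | x in [set x : 'cV[R[i]]_n | vnorm2 x <= 1]].
Proof.
split.
  by exists (vnorm2 (A *m 0)); exists 0 => //=; rewrite vnorm2_0 ler01.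
exists (Num.sqrt (\sum_i (\sum_j nc (A i j)) ^+ 2)).
move=> _ [x /= hx <-]; rewrite /vnorm2 ler_sqrt; last first.
  by apply: sumr_ge0 => i _; apply: sqr_ge0.
apply: ler_sum => i _; apply: cabs2_le_nc; apply: le_trans (mulmx_entry _ _ _) _.
apply: ler_sum => j _; rewrite ler_piMr ?nc_ge0 //; exact: entry_le1.
Qed.

Lemma specnorm_bound (A : 'M[R[i]]_n) w :
  vnorm2 (A *m w) <= specnorm A * vnorm2 w.
Proof.
have [w0|wn0] := eqVneq (vnorm2 w) 0.
  by rewrite (vnorm2_eq0 w0) mulmx0 vnorm2_0 mulr0.
have wp : 0 < vnorm2 w by rewrite lt_def wn0 vnorm2_ge0.
set c := vnorm2 w.
have hu : vnorm2 (c^-1%:C%C *: w) <= 1.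
  by rewrite vnorm2Z ger0_norm ?invr_ge0 ?vnorm2_ge0 // mulVf.
have h := sup_upper_bound (specnorm_has_sup A) (ex_intro2 _ _ (c^-1%:C%C *: w) hu erefl).
move: h; rewrite -scalemxAr vnorm2Z ger0_norm ?invr_ge0 ?vnorm2_ge0 // => h.
by move: h; rewrite ler_pdivrMl // mulrC.
Qed.


End Aux.

Section Main.
Local Open Scope classical_set_scope.
Variable R : realType.

Lemma ssv_char (n : nat) (ks ns : seq nat) (M : 'M[R[i]]_n) (s : R) :
  (0 < n)%N -> 0 <= s -> (forall z, vnorm2 (M *m z) <= s * vnorm2 z) ->
  M *m (const_mx 1 : 'cV_n) = s%:C%C *: const_mx 1 -> ssv ks ns M = s.
Proof.
move=> n0 s0 hM heig.
have ha : forall Delta : 'M[R[i]]_n, \det (1%:M + M *m Delta) = 0 ->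
    1 <= s * specnorm Delta.
  move=> Delta /eqP; rewrite -det_tr => /det0P [v vn0 hv].
  set x := v^T.
  have hx : (1%:M + M *m Delta) *m x = 0.
    by apply: trmx_inj; rewrite trmx_mul trmxK trmx0.
  have ex : x = M *m (Delta *m (- x)).
    move/eqP: hx; rewrite mulmxDl mul1mx -mulmxA addr_eq0 => /eqP hx.
    by rewrite !mulmxN.
  have xn0 : x != 0.
    by apply: contraNneq vn0 => h; rewrite -[v]trmxK -/x h trmx0.
  have xp : 0 < vnorm2 x.
    rewrite lt_def vnorm2_ge0 andbT; apply: contraNneq xn0 => h.
    by rewrite (vnorm2_eq0 h).
  have : vnorm2 x <= s * (specnorm Delta * vnorm2 x).
    rewrite {1}ex; apply: le_trans (hM _) _; rewrite ler_wpM2l //.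
    by rewrite -[X in _ <= _ * X]vnorm2N; apply: specnorm_bound.
  by rewrite mulrA -{1}[vnorm2 x]mul1r ler_pM2r.
rewrite /ssv.
set S := [set specnorm Delta | Delta in _]%classic.
have [s00|sn0] := eqVneq s 0.
  have S0 : ~ (S !=set0).
    move=> [_ [Delta [_ hdet] _]]; have := ha Delta hdet.
    by rewrite s00 mul0r ler10.
  by case: ifPn => [/asboolP|].
have sp : 0 < s by rewrite lt_def sn0 s0.
pose D0 : 'M[R[i]]_n := (- s^-1)%:C%C%:M.
have inb : in_block ks ns D0.
  split => i j h; rewrite !mxE.
    have /negPf -> : i != j by apply/eqP => ij; apply: h; rewrite ij.
    by rewrite mulr0n.
  move=> _; split; last by rewrite !eqxx.
  by move=> /eqP /negPf ->; rewrite mulr0n.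
have hdet : \det (1%:M + M *m D0) = 0.
  apply/eqP; rewrite -det_tr; apply/det0P; exists (const_mx 1 : 'rV_n).
    apply/eqP => /matrixP /(_ 0 (Ordinal n0)); rewrite !mxE => /eqP.
    by rewrite oner_eq0.
  apply: trmx_inj; rewrite trmx_mul trmxK trmx0 trmx_const.
  rewrite mulmxDl mul1mx /D0 -mulmxA mul_scalar_mx -scalemxAr heig scalerA.
  rewrite -rmorphM /= mulNr mulVf // rmorphN1 scaleN1r subrr //.
have sp0 : specnorm D0 <= s^-1.
  rewrite /specnorm; apply: ge_sup.
    by exists (vnorm2 (D0 *m 0)); exists 0 => //=; rewrite vnorm2_0 ler01.
  move=> _ [x hx <-]; rewrite /D0 mul_scalar_mx vnorm2Z normrN.
  rewrite ger0_norm; last by rewrite invr_ge0 ltW.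
  by rewrite ler_piMr // invr_ge0 (ltW sp).
have SD0 : S (specnorm D0) by exists D0.
have Sn0 : S !=set0 by exists (specnorm D0).
case: ifPn => [_|/asboolPn //].
have lbS : lbound S s^-1.
  move=> _ [Delta [_ hd] <-]; have := ha Delta hd.
  by rewrite -ler_pdivrMl // mulr1.
have -> : inf S = s^-1.
  apply/le_anti; rewrite lb_le_inf // andbT.
  apply: le_trans sp0; apply: ge_inf => //; by exists s^-1.
by rewrite invrK.
Qed.


Lemma cmxE (n : nat) (A : 'M[R]_n) i j : cmx A i j = (A i j)%:C%C.
Proof. by rewrite /cmx mxE. Qed.

Lemma schur (n : nat) (A : 'M[R]_n) (sg : R) :
  (forall i j, 0 <= A i j) -> (forall i, \sum_j A i j = sg) ->
  (forall j, \sum_i A i j = sg) -> 0 <= sg ->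
  forall z, vnorm2 (cmx A *m z) <= sg * vnorm2 z.
Proof.
move=> A0 hr hc sg0 z.
rewrite /vnorm2 -[X in X * _](ger0_norm sg0) -sqrtr_sqr -sqrtrM ?sqr_ge0 //.
rewrite ler_sqrt; last by rewrite mulr_ge0 ?sqr_ge0 ?sumc_ge0.
pose t j := nc (z j 0).
apply: (@le_trans _ _ (\sum_i sg * \sum_j A i j * t j ^+ 2)).
  apply: ler_sum => i _.
  apply: (@le_trans _ _ ((\sum_j A i j * t j) ^+ 2)).
    apply: cabs2_le_nc; apply: le_trans (mulmx_entry _ _ _) _.
    by apply: ler_sum => j _; rewrite cmxE nc_real ger0_norm.
  by rewrite -(hr i); apply: cs_ineq.
rewrite -mulr_sumr exchange_big /= expr2 -mulrA ler_wpM2l //.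
rewrite mulr_sumr; apply: ler_sum => j _.
by rewrite -mulr_suml hc /t nc_sqr.
Qed.

Lemma schur_eig (n : nat) (A : 'M[R]_n) (sg : R) :
  (forall i, \sum_j A i j = sg) ->
  cmx A *m (const_mx 1 : 'cV_n) = sg%:C%C *: const_mx 1.
Proof.
move=> hr; apply/matrixP => i j; rewrite !mxE -(hr i) rmorph_sum mulr1.
by apply: eq_bigr => k _; rewrite !mxE mulr1.
Qed.

Lemma pow_bound (n : nat) (M : 'M[R[i]]_n) (sg : R) : 0 <= sg ->
  (forall z, vnorm2 (M *m z) <= sg * vnorm2 z) ->
  forall m z, vnorm2 (M ^+ m *m z) <= sg ^+ m * vnorm2 z.
Proof.
move=> sg0 hM; elim=> [|m IH] z.
  by rewrite !expr0 -idmxE mul1mx mul1r.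
rewrite exprS -mulmxE -mulmxA; apply: le_trans (hM _) _.
by rewrite exprS -mulrA ler_wpM2l.
Qed.

Lemma pow_eig (n : nat) (M : 'M[R[i]]_n) (sg : R) :
  M *m (const_mx 1 : 'cV_n) = sg%:C%C *: const_mx 1 ->
  forall m, M ^+ m *m (const_mx 1 : 'cV_n) = (sg ^+ m)%:C%C *: const_mx 1.
Proof.
move=> hM; elim=> [|m IH].
  by rewrite !expr0 -idmxE mul1mx rmorph1 scale1r.
rewrite exprS -mulmxE -mulmxA IH -scalemxAr hM scalerA -rmorphM /=.
by rewrite exprS mulrC.
Qed.

End Main.

Theorem corollary2p2 (R : realType) (n k : nat) (D : 'I_k -> 'M[R]_n)
  (delta : 'I_k -> R) :
  (0 < n)%N ->
  (forall l, doubly_stochastic (D l)) ->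
  (forall l, 0 < delta l) ->
  forall (m : nat) (ks ns : seq nat), block_structure n ks ns ->
  ssv ks ns (cmx (Sk delta D) ^+ m) = (\sum_(l < k) delta l) ^+ m.
Proof.
move=> n0 hD hd m ks ns _.
set sg := \sum_(l < k) delta l.
have sg0 : 0 <= sg by apply: sumr_ge0 => l _; apply: ltW.
have SkE i j : Sk delta D i j = \sum_l delta l * D l i j.
  by rewrite /Sk summxE; apply: eq_bigr => l _; rewrite mxE.
have A0 i j : 0 <= Sk delta D i j.
  rewrite SkE; apply: sumr_ge0 => l _; rewrite mulr_ge0 ?(ltW (hd l)) //.
  by case: (hD l) => h _; apply: h.
have hr i : \sum_j Sk delta D i j = sg.
  under eq_bigr do rewrite SkE.
  rewrite exchange_big /=; apply: eq_bigr => l _.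
  by rewrite -mulr_sumr; case: (hD l) => _ [h _]; rewrite h mulr1.
have hc j : \sum_i Sk delta D i j = sg.
  under eq_bigr do rewrite SkE.
  rewrite exchange_big /=; apply: eq_bigr => l _.
  by rewrite -mulr_sumr; case: (hD l) => _ [_ h]; rewrite h mulr1.
apply: ssv_char => //; first exact: exprn_ge0.
  exact: pow_bound (schur A0 hr hc sg0) m.
exact: pow_eig (schur_eig hr) m.
Qed.
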